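(* Let $\Omega_n=\dfrac{\pi^{n/2}}{\Gamma\left(\frac n2+1\right)}$ and define \[ \theta(n)=\frac13+\frac{1}{18n}-\frac{31}{810n^2},\qquad \nu(n)=\theta(n)-\frac{139}{9720n^3}. \] Then \[ \frac{1}{\sqrt{\pi(n+\theta(n))}}\left(\frac{2\pi e}{n}\right)^{\frac n2}<\Omega_n \] for every integer $n\ge3$, and \[ \Omega_n<\frac{1}{\sqrt{\pi(n+\nu(n))}}\left(\frac{2\pi e}{n}\right)^{\frac n2} \] for every integer $n\ge1$.
   Context: $\Omega_n$ is the volume of the unit ball in $\mathbb{R}^n$; $\Gamma$ is Euler's gamma function. *)

(* Defs.v *)
From Stdlib Require Import Reals.
From Coquelicot Require Import Coquelicot.
Open Scope R_scope.

Definition Gamma (s : R) : R :=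
  RInt_gen (fun t => Rpower t (s - 1) * exp (- t))
           (at_right 0) (Rbar_locally p_infty).

Definition Omega (n : nat) : R :=
  Rpower PI (INR n / 2) / Gamma (INR n / 2 + 1).

Definition theta (n : nat) : R :=
  1/3 + 1 / (18 * INR n) - 31 / (810 * INR n ^ 2).

Definition nu (n : nat) : R :=
  theta n - 139 / (9720 * INR n ^ 3).

Definition vol_bound (c : R) (n : nat) : R :=
  / sqrt (PI * (INR n + c)) * Rpower (2 * PI * exp 1 / INR n) (INR n / 2).

(* Main.v *)
Require Import Defs.
From Stdlib Require Import Reals Lra Lia Psatz Classical Arith Factorial.
From Coquelicot Require Import Coquelicot.
Open Scope R_scope.

Lemma mono_deriv (f df : R -> R) (a b : R) : a <= b ->
  (forall x, a <= x <= b -> is_derive f x (df x)) ->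
  (forall x, a <= x <= b -> 0 <= df x) -> f a <= f b.
Proof.
intros hab hd hp. destruct (Req_dec a b) as [->|hne]; [lra|].
destruct (MVT_cor2 f df a b) as [c [hc1 hc2]]; [lra| |].
- intros c hc. apply is_derive_Reals. now apply hd.
- assert (0 <= df c) by (apply hp; lra). nra.
Qed.

Fixpoint Sat (m:nat) (z:R) : R :=
  match m with O => 0 | S k => Sat k z + z^(2*k+1)/INR(2*k+1) end.
Fixpoint Tat (m:nat) (z:R) : R :=
  match m with O => 0 | S k => Tat k z + z^(2*k) end.

Lemma Sat_deriv m z : is_derive (Sat m) z (Tat m z).
Proof.
induction m as [|k IH]; simpl.
- apply (is_derive_const 0).
- apply (is_derive_plus (Sat k) (fun z => z^(2*k+1)/INR(2*k+1))); [exact IH|].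
  auto_derive; [trivial|].
  replace (pred (k + (k + 0) + 1)) with (2*k)%nat by lia.
  replace (k + (k + 0))%nat with (2*k)%nat by lia.
  field. apply not_0_INR. lia.
Qed.

Lemma Tat_id m z : (1 - z^2) * Tat m z = 1 - z^(2*m).
Proof.
induction m as [|k IH]; cbn [Tat].
- simpl. ring.
- replace (2 * S k)%nat with (2*k+2)%nat by lia. rewrite pow_add.
  rewrite Rmult_plus_distr_l, IH. ring.
Qed.

Lemma Sat0 m : Sat m 0 = 0.
Proof.
induction m as [|k IH]; cbn [Sat]; [reflexivity|]. rewrite IH.
rewrite pow_i by lia. unfold Rdiv. ring.
Qed.

Definition Lz (z:R) := ln ((1+z)/(1-z)).

Lemma Lz_eq z : -1 < z < 1 -> Lz z = ln (1+z) - ln (1-z).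
Proof. intros. unfold Lz. rewrite ln_div; lra. Qed.

Lemma dL y : -1 < y < 1 -> is_derive (fun y => ln (1+y) - ln (1-y)) y (2/(1-y^2)).
Proof. intros h. auto_derive. lra. field. split; [|split]; nra. Qed.

Lemma Lz_lower m z : 0 <= z < 1 -> 2 * Sat m z <= Lz z.
Proof.
intros hz. rewrite Lz_eq by lra.
assert (H := mono_deriv (fun y => ln(1+y) - ln(1-y) - 2*Sat m y)
   (fun y => 2/(1-y^2) - 2*Tat m y) 0 z). cbv beta in H.
replace (ln (1+0) - ln (1-0) - 2 * Sat m 0) with 0 in H
  by (rewrite Sat0, Rplus_0_r, Rminus_0_r, ln_1; ring).
cut (0 <= ln (1 + z) - ln (1 - z) - 2 * Sat m z); [lra|]. apply H; [lra| |].
- intros x hx. apply (is_derive_minus (fun y => ln(1+y) - ln(1-y)) (fun y => 2 * Sat m y)).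
  + apply dL; lra.
  + apply (is_derive_scal (Sat m) x 2). apply Sat_deriv.
- intros x hx. assert (h1: 0 < 1 - x^2) by nra.
  assert (ht := Tat_id m x).
  replace (2/(1-x^2) - 2 * Tat m x) with (2 * x^(2*m) / (1-x^2)).
  + apply Rle_mult_inv_pos; [|lra]. apply Rmult_le_pos; [lra|]. apply pow_le; lra.
  + assert (Tat m x = (1 - x^(2*m))/(1-x^2)) as -> by (rewrite <- ht; field; lra).
    field; lra.
Qed.

Lemma Lz_upper m z zm : 0 <= z <= zm -> zm < 1 ->
  Lz z <= 2 * (Sat m z + z^(2*m+1) / (INR (2*m+1) * (1 - zm^2))).
Proof.
intros hz hzm. rewrite Lz_eq by lra.
assert (hzm2 : 0 < 1 - zm^2) by nra.
assert (hn : 0 < INR (2*m+1)) by (apply lt_0_INR; lia).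
assert (H := mono_deriv (fun y => 2 * (Sat m y + y^(2*m+1) / (INR (2*m+1) * (1 - zm^2)))
   - (ln(1+y) - ln(1-y)))
   (fun y => 2 * (Tat m y + y^(2*m) / (1-zm^2)) - 2/(1-y^2)) 0 z). cbv beta in H.
replace (2 * (Sat m 0 + 0 ^ (2 * m + 1) / (INR (2 * m + 1) * (1 - zm ^ 2))) -
    (ln (1 + 0) - ln (1 - 0))) with 0 in H.
2:{ rewrite Sat0, Rplus_0_r, Rminus_0_r, ln_1. rewrite pow_i by lia. field. lra. }
cut (0 <= 2 * (Sat m z + z ^ (2 * m + 1) / (INR (2 * m + 1) * (1 - zm ^ 2))) -
      (ln (1 + z) - ln (1 - z))); [lra|]. apply H; [lra| |].
- intros x hx.
  apply (is_derive_minus (fun y => 2 * (Sat m y + y^(2*m+1) / (INR (2*m+1) * (1 - zm^2))))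
    (fun y => ln(1+y) - ln(1-y))); [|apply dL; lra].
  apply (is_derive_scal (fun y => Sat m y + y^(2*m+1) / (INR (2*m+1) * (1 - zm^2))) x 2).
  apply (is_derive_plus (Sat m) (fun y => y^(2*m+1) / (INR (2*m+1) * (1 - zm^2))));
    [apply Sat_deriv|].
  auto_derive; [trivial|].
  replace (pred (m + (m + 0) + 1)) with (2*m)%nat by lia.
  replace (m + (m + 0) + 1)%nat with (2*m+1)%nat by lia. field. split; lra.
- intros x hx. assert (h1: 0 < 1 - x^2) by nra.
  assert (ht := Tat_id m x).
  assert (hp : 0 <= x^(2*m)) by (apply pow_le; lra).
  replace (2 * (Tat m x + x^(2*m) / (1-zm^2)) - 2/(1-x^2)) with
    (2 * x^(2*m) * ((1 - x^2) - (1 - zm^2)) / ((1-zm^2)*(1-x^2))).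
  + apply Rle_mult_inv_pos; [|nra]. apply Rmult_le_pos; [lra|]. nra.
  + assert (Tat m x = (1 - x^(2*m))/(1-x^2)) as -> by (rewrite <- ht; field; lra).
    field; lra.
Qed.

Definition thR y := 1/3 + 1/(18*y) - 31/(810*y^2).
Definition nuR y := thR y - 139/(9720*y^3).
Definition vv (c : R -> R) x := ((x + 2 + c (x+2)) - (x + c x)) / ((x + 2 + c (x+2)) + (x + c x)).
Ltac hpos := match goal with
 | |- 0 <= ?a + ?t * ?b => apply Rplus_le_le_0_compat; [lra | apply Rmult_le_pos; [lra | hpos]]
 | |- _ => lra end.
Ltac hposs := match goal with
 | |- 0 < ?a + ?t * ?b => apply Rplus_lt_le_0_compat; [lra | apply Rmult_le_pos; [lra | hpos]]
 | |- _ => lra end.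
Lemma polyT (x : R) : 4 <= x ->
  2 - x*(2*((/(x+1)) + (/(x+1))^3/3 + (/(x+1))^5/5 + (/(x+1))^7/7*(25/24))) - 2*((vv thR x) + (vv thR x)^3/3 + (vv thR x)^5/5*(16/15)) = ((1407607373535377453055380548217183885139456000000/7) + (x - 4) * ((10488182345589353922498478104202025855273702400000/7) + (x - 4) * ((5000082148265082616199197815891824842466641920000) + (x - 4) * ((71571282534090969731088393072945472240154664960000/7) + (x - 4) * ((102162091972689755001696077414515073042518233600000/7) + (x - 4) * ((109295577187867671955225481767238901060762470400000/7) + (x - 4) * ((91596169434410580227436617932978344531584409600000/7) + (x - 4) * ((8849185075599130457782606266375671012674828800000) + (x - 4) * ((34517719504166012823960633277119392715840076800000/7) + (x - 4) * ((16090097171373016502619453875168403592555545600000/7) + (x - 4) * ((6343827157116581825755351197214916884703020800000/7) + (x - 4) * ((304661044419619733168235546024701270963919360000) + (x - 4) * ((614783048396424206950285772582380567054044672000/7) + (x - 4) * ((152545453513389924664616420795002852119869760000/7) + (x - 4) * ((4663772640073475104518423599496786532713600000) + (x - 4) * ((6028833393483059938768198846204914404006400000/7) + (x - 4) * ((959665306815122436969582793183393140813600000/7) + (x - 4) * ((131314241186282340926547198719423505696000000/7) + (x - 4) * ((15375634537201067492075549132907895656000000/7) + (x - 4) * ((1530264154519973466777550924323681696000000/7) + (x - 4) * ((128236821087828993850352304482188320000000/7) + (x - 4) * ((1275854585925423676753632651477120000000) + (x - 4) * ((507605843483594147519344673271360000000/7) + (x - 4) * ((22941413514851594287997917728000000000/7)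 + (x - 4) * ((793098925382630565361734004800000000/7) + (x - 4) * ((2814003005140128918383884800000000) + (x - 4) * ((312962390766499665863376000000000/7) + (x - 4) * (341335213283415601036800000000)))))))))))))))))))))))))))) / ((x+1)^7 * ((-100440) + x * ((45360) + x * ((7166880) + x * ((12320100) + x * ((6998400) + x * (1312200))))))^5).
Proof.
intros hx. unfold vv, thR.
assert (0 < ((-100440) + x * ((45360) + x * ((7166880) + x * ((12320100) + x * ((6998400) + x * (1312200))))))) by nra.
field; repeat split; try lra; nra.
Qed.

Lemma polyT_sgn (x : R) : 4 <= x ->
  0 < 2 - x*(2*((/(x+1)) + (/(x+1))^3/3 + (/(x+1))^5/5 + (/(x+1))^7/7*(25/24))) - 2*((vv thR x) + (vv thR x)^3/3 + (vv thR x)^5/5*(16/15)).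
Proof.
intros hx. rewrite (polyT x hx).
assert (0 < ((-100440) + x * ((45360) + x * ((7166880) + x * ((12320100) + x * ((6998400) + x * (1312200))))))) by nra.

apply Rdiv_lt_0_compat; [hposs|].
apply Rmult_lt_0_compat; apply pow_lt; lra.
Qed.

Lemma polyN (x : R) : 1 <= x ->
  2 - x*(2*((/(x+1)) + (/(x+1))^3/3 + (/(x+1))^5/5)) - 2*((vv nuR x) + (vv nuR x)^3/3 + (vv nuR x)^5/5) = - ((1648155618822182673995520404141471040000) + (x - 1) * ((33728999674935929734288374458354267760000) + (x - 1) * ((332131414411620646468630505503502051700000) + (x - 1) * ((2096236595069338611906823011772107342600000) + (x - 1) * ((9530390716292563600788399913819282774350000) + (x - 1) * ((33257645517487048896225316170674755224315000) + (x - 1) * ((92689111286453731676986543736622023036246250) + (x - 1) * ((211956691133743366657371460889887292260725000) + (x - 1) * ((405472908585317423804018506342380885222037500) + (x - 1) * ((658322669171552794435298756222937983615850000) + (x - 1) * ((917194623204220595951223796772392634799948750) + (x - 1) * ((1105961038154121338306857124485242397827120000) + (x - 1) * ((1161912535811951941172545641185435878597875000) + (x - 1) * ((1069121773416331357039683933575237826274575000) + (x - 1) * ((865068711338805811397852586841419464074443750) + (x - 1) * ((617390594961089715159402368953031315698485000) + (x - 1) * ((389487807448806178101414313439381623859437500) + (x - 1) * ((217494597320248133551055397356825128152900000) + (x - 1) * ((107571603929740006490829505771521012456581250) + (x - 1) * ((47119271400779918769892404353007720391950000) + (x - 1) * ((18263517717653250770568920016482091068580000) + (x - 1) * ((6253788172092102277702597576727393935320000)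 + (x - 1) * ((1887035976564047878422985144445966259600000) + (x - 1) * ((499989764974962272101550323600195299600000) + (x - 1) * ((115778516648438226753532422044241163200000) + (x - 1) * ((23285075653874828582934142704315120000000) + (x - 1) * ((4034449940730602726600275593546468000000) + (x - 1) * ((595846210574224011759749330780592000000) + (x - 1) * ((73962976528139159186843424930720000000) + (x - 1) * ((7570849333690982337329236564800000000) + (x - 1) * ((622178387933698669192754209920000000) + (x - 1) * ((39461445643344219756063043200000000) + (x - 1) * ((1813093895156229016220563200000000) + (x - 1) * ((53701983770419016349235200000000) + (x - 1) * (769818707256608825040000000000))))))))))))))))))))))))))))))))))) / ((x+1)^5 * ((-75060) + x * ((-313470) + x * ((-66015) + x * ((14360355) + x * ((31807080) + x * ((26316900) + x * ((9622800) + x * (1312200))))))))^5).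
Proof.
intros hx. unfold vv, nuR, thR.
assert (0 < ((-75060) + x * ((-313470) + x * ((-66015) + x * ((14360355) + x * ((31807080) + x * ((26316900) + x * ((9622800) + x * (1312200))))))))) by nra.
field; repeat split; try lra; nra.
Qed.

Lemma polyN_sgn (x : R) : 1 <= x ->
  2 - x*(2*((/(x+1)) + (/(x+1))^3/3 + (/(x+1))^5/5)) - 2*((vv nuR x) + (vv nuR x)^3/3 + (vv nuR x)^5/5) < 0.
Proof.
intros hx. rewrite (polyN x hx).
assert (0 < ((-75060) + x * ((-313470) + x * ((-66015) + x * ((14360355) + x * ((31807080) + x * ((26316900) + x * ((9622800) + x * (1312200))))))))) by nra.
match goal with |- - ?a / ?b < 0 => cut (0 < a / b); [lra|] end.
apply Rdiv_lt_0_compat; [hposs|].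
apply Rmult_lt_0_compat; apply pow_lt; lra.
Qed.

Lemma vvT_eq (x : R) : 4 <= x -> vv thR x = ((754579800) + (x - 4) * ((629227440) + (x - 4) * ((194132700) + (x - 4) * ((26244000) + (x - 4) * (1312200))))) / ((4038520680) + (x - 4) * ((4119951600) + (x - 4) * ((1666662480) + (x - 4) * ((334246500) + (x - 4) * ((33242400) + (x - 4) * (1312200)))))).
Proof. intros hx. unfold vv, thR. field; repeat split; nra. Qed.

Lemma vvT_p (x : R) : 4 <= x -> 0 <= ((754579800) + (x - 4) * ((629227440) + (x - 4) * ((194132700) + (x - 4) * ((26244000) + (x - 4) * (1312200))))).
Proof. intros hx. hpos. Qed.
Lemma vvT_q (x : R) : 4 <= x -> 0 < ((4038520680) + (x - 4) * ((4119951600) + (x - 4) * ((1666662480) + (x - 4) * ((334246500) + (x - 4) * ((33242400) + (x - 4) * (1312200)))))).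
Proof. intros hx. hposs. Qed.
Lemma vvT_4 (x : R) : 4 <= x -> 4 * ((754579800) + (x - 4) * ((629227440) + (x - 4) * ((194132700) + (x - 4) * ((26244000) + (x - 4) * (1312200))))) <= ((4038520680) + (x - 4) * ((4119951600) + (x - 4) * ((1666662480) + (x - 4) * ((334246500) + (x - 4) * ((33242400) + (x - 4) * (1312200)))))).
Proof. intros hx. cut (0 <= ((1020201480) + (x - 4) * ((1603041840) + (x - 4) * ((890131680) + (x - 4) * ((229270500) + (x - 4) * ((27993600) + (x - 4) * (1312200))))))). lra. hpos. Qed.
Lemma vvN_eq (x : R) : 1 <= x -> vv nuR x = ((35619885) + (x - 1) * ((141298020) + (x - 1) * ((223441335) + (x - 1) * ((177976440) + (x - 1) * ((74722500) + (x - 1) * ((15746400) + (x - 1) * (1312200))))))) / ((82964790) + (x - 1) * ((368370585) + (x - 1) * ((668924730) + (x - 1) * ((643140675) + (x - 1) * ((353660580) + (x - 1) * ((111609900) + (x - 1) * ((18808200) + (x - 1) * (1312200)))))))).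
Proof. intros hx. unfold vv, nuR, thR. field; repeat split; nra. Qed.

Lemma vvN_p (x : R) : 1 <= x -> 0 <= ((35619885) + (x - 1) * ((141298020) + (x - 1) * ((223441335) + (x - 1) * ((177976440) + (x - 1) * ((74722500) + (x - 1) * ((15746400) + (x - 1) * (1312200))))))).
Proof. intros hx. hpos. Qed.
Lemma vvN_q (x : R) : 1 <= x -> 0 < ((82964790) + (x - 1) * ((368370585) + (x - 1) * ((668924730) + (x - 1) * ((643140675) + (x - 1) * ((353660580) + (x - 1) * ((111609900) + (x - 1) * ((18808200) + (x - 1) * (1312200)))))))).
Proof. intros hx. hposs. Qed.
Lemma vvN_1 (x : R) : 1 <= x -> ((35619885) + (x - 1) * ((141298020) + (x - 1) * ((223441335) + (x - 1) * ((177976440) + (x - 1) * ((74722500) + (x - 1) * ((15746400) + (x - 1) * (1312200))))))) < ((82964790) + (x - 1) * ((368370585) + (x - 1) * ((668924730) + (x - 1) * ((643140675) + (x - 1) * ((353660580) + (x - 1) * ((111609900) + (x - 1) * ((18808200) + (x - 1) * (1312200)))))))).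
Proof. intros hx. cut (0 < ((47344905) + (x - 1) * ((227072565) + (x - 1) * ((445483395) + (x - 1) * ((465164235) + (x - 1) * ((278938080) + (x - 1) * ((95863500) + (x - 1) * ((17496000) + (x - 1) * (1312200))))))))). lra. hposs. Qed.

Lemma frac_bnd4 p q : 0 <= p -> 0 < q -> 4*p <= q -> 0 <= p/q <= 1/4.
Proof. intros. split. apply Rle_mult_inv_pos; lra.
 apply (Rmult_le_reg_r q); [lra|]. field_simplify; lra. Qed.
Lemma frac_bnd1 p q : 0 <= p -> 0 < q -> p < q -> 0 <= p/q < 1.
Proof. intros. split. apply Rle_mult_inv_pos; lra.
 apply (Rmult_lt_reg_r q); [lra|]. field_simplify; lra. Qed.

Lemma vvT_bnd x : 4 <= x -> 0 <= vv thR x <= 1/4.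
Proof. intros hx. rewrite (vvT_eq x hx). apply frac_bnd4;
  [apply vvT_p|apply vvT_q|apply vvT_4]; exact hx. Qed.
Lemma vvN_bnd x : 1 <= x -> 0 <= vv nuR x < 1.
Proof. intros hx. rewrite (vvN_eq x hx). apply frac_bnd1;
  [apply vvN_p|apply vvN_q|apply vvN_1]; exact hx. Qed.

Definition Dfun (c : R -> R) (x : R) := 2 - x * Lz (/(x+1)) - Lz (vv c x).

Lemma U3 z : Sat 3 z + z^(2*3+1)/(INR(2*3+1)*(1-(1/5)^2)) = z + z^3/3 + z^5/5 + z^7/7*(25/24).
Proof. simpl. field. Qed.
Lemma U2 z : Sat 2 z + z^(2*2+1)/(INR(2*2+1)*(1-(1/4)^2)) = z + z^3/3 + z^5/5*(16/15).
Proof. simpl. field. Qed.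
Lemma S3 z : Sat 3 z = z + z^3/3 + z^5/5.
Proof. simpl. field. Qed.

Lemma DT_pos x : 4 <= x -> 0 < Dfun thR x.
Proof.
intros hx. unfold Dfun.
assert (hu : 0 <= /(x+1) <= 1/5).
{ split. apply Rlt_le, Rinv_0_lt_compat; lra.
  apply (Rmult_le_reg_r (x+1)); [lra|]. rewrite Rinv_l by lra. lra. }
pose proof (Lz_upper 3 (/(x+1)) (1/5) hu ltac:(lra)) as H1. rewrite U3 in H1.
pose proof (Lz_upper 2 (vv thR x) (1/4) (vvT_bnd x hx) ltac:(lra)) as H2. rewrite U2 in H2.
pose proof (polyT_sgn x hx) as HN.
assert (x * Lz (/(x+1)) <= x * (2*((/(x+1)) + (/(x+1))^3/3 + (/(x+1))^5/5 + (/(x+1))^7/7*(25/24)))).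
{ apply Rmult_le_compat_l; lra. }
lra.
Qed.

Lemma DN_neg x : 1 <= x -> Dfun nuR x < 0.
Proof.
intros hx. unfold Dfun.
assert (hu : 0 <= /(x+1) < 1).
{ split. apply Rlt_le, Rinv_0_lt_compat; lra.
  apply (Rmult_lt_reg_r (x+1)); [lra|]. rewrite Rinv_l by lra. lra. }
pose proof (Lz_lower 3 (/(x+1)) hu) as H1. rewrite S3 in H1.
pose proof (Lz_lower 3 (vv nuR x) (vvN_bnd x hx)) as H2. rewrite S3 in H2.
pose proof (polyN_sgn x hx) as HN.
assert (x * (2*((/(x+1)) + (/(x+1))^3/3 + (/(x+1))^5/5)) <= x * Lz (/(x+1))).
{ apply Rmult_le_compat_l; lra. }
lra.
Qed.

Lemma DT35 : 0 < Dfun thR 3 + Dfun thR 5.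
Proof.
unfold Dfun.
replace (/(3+1)) with (1/4) by field. replace (/(5+1)) with (1/6) by field.
replace (vv thR 3) with (181823/791923) by (unfold vv, thR; field).
replace (vv thR 5) with (991047/6292553) by (unfold vv, thR; field).
pose proof (Lz_upper 6 (1/4) (1/4) ltac:(lra) ltac:(lra)) as H1.
pose proof (Lz_upper 6 (1/6) (1/4) ltac:(lra) ltac:(lra)) as H2.
pose proof (Lz_upper 6 (181823/791923) (1/4) ltac:(lra) ltac:(lra)) as H3.
pose proof (Lz_upper 6 (991047/6292553) (1/4) ltac:(lra) ltac:(lra)) as H4.
simpl in H1, H2, H3, H4.
lra.
Qed.

Lemma ball_R (x y e : R) : Rabs (y - x) < e -> ball x e y.
Proof. intros H. exact H. Qed.
Lemma ball_R' (x y e : R) : ball x e y -> Rabs (y - x) < e.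
Proof. intros H. exact H. Qed.

Lemma exp_le x y : x <= y -> exp x <= exp y.
Proof. intros h. destruct (Req_dec x y) as [->|hn]; [lra|]. apply Rlt_le, exp_increasing; lra. Qed.

Lemma lim_pinf_of (F : R -> R) (l : R) :
  (forall eps, 0 < eps -> exists M, forall t, M < t -> Rabs (F t - l) < eps) ->
  filterlim F (Rbar_locally p_infty) (locally l).
Proof.
intros H. apply filterlim_locally. intros eps.
destruct (H eps (cond_pos eps)) as [M HM]. exists M. intros t ht. apply ball_R, HM; auto.
Qed.

Lemma lim_right0_of (F : R -> R) (l : R) :
  (forall eps, 0 < eps -> exists d, 0 < d /\ forall t, 0 < t < d -> Rabs (F t - l) < eps) ->
  filterlim F (at_right 0) (locally l).
Proof.
intros H. apply filterlim_locally. intros eps.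
destruct (H eps (cond_pos eps)) as [d [hd Hd]].
exists (mkposreal d hd). intros y hy hy0. apply ball_R. apply Hd.
apply ball_R' in hy. simpl in hy. rewrite Rminus_0_r in hy.
rewrite Rabs_right in hy by lra. lra.
Qed.

Lemma mono_lim_pinf (F : R -> R) (M : R) :
  (forall a b, 0 < a -> a <= b -> F a <= F b) ->
  (forall b, 0 < b -> F b <= M) ->
  exists l, filterlim F (Rbar_locally p_infty) (locally l).
Proof.
intros Hm Hb.
set (E := fun y => exists b, 0 < b /\ y = F b).
assert (hE : bound E). { exists M. intros y [b [hb ->]]. now apply Hb. }
assert (hE2 : exists y, E y). { exists (F 1), 1. split; [lra|reflexivity]. }
destruct (completeness E hE hE2) as [l [hl1 hl2]].
exists l. apply lim_pinf_of. intros eps heps.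
destruct (classic (exists b, 0 < b /\ l - eps < F b)) as [[b0 [hb0 hb0']]|hn].
- exists b0. intros t ht.
  assert (F b0 <= F t) by (apply Hm; lra).
  assert (F t <= l) by (apply hl1; exists t; split; [lra|reflexivity]).
  rewrite Rabs_left1 by lra. lra.
- exfalso. assert (l <= l - eps); [|lra].
  apply hl2. intros y [b [hb ->]].
  apply Rnot_lt_le. intros hc. apply hn. exists b. split; assumption.
Qed.

Lemma mono_lim_right0 (F : R -> R) (m : R) :
  (forall a b, 0 < a -> a <= b -> F a <= F b) ->
  (forall b, 0 < b -> m <= F b) ->
  exists l, filterlim F (at_right 0) (locally l).
Proof.
intros Hm Hb.
set (E := fun y => exists b, 0 < b /\ y = - F b).
assert (hE : bound E). { exists (-m). intros y [b [hb ->]]. specialize (Hb b hb). lra. }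
assert (hE2 : exists y, E y). { exists (- F 1), 1. split; [lra|reflexivity]. }
destruct (completeness E hE hE2) as [l [hl1 hl2]].
exists (-l). apply lim_right0_of. intros eps heps.
destruct (classic (exists b, 0 < b /\ l - eps < - F b)) as [[b0 [hb0 hb0']]|hn].
- exists b0. split; [lra|]. intros t ht.
  assert (F t <= F b0) by (apply Hm; lra).
  assert (- F t <= l) by (apply hl1; exists t; split; [lra|reflexivity]).
  rewrite Rabs_right by lra. lra.
- exfalso. assert (l <= l - eps); [|lra].
  apply hl2. intros y [b [hb ->]].
  apply Rnot_lt_le. intros hc. apply hn. exists b. split; assumption.
Qed.

Lemma at_right_pos : at_right 0 (fun a => 0 < a).
Proof. unfold at_right, within. apply filter_forall. auto. Qed.
Lemma pinf_pos : Rbar_locally p_infty (fun b => 0 < b).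
Proof. exists 0. auto. Qed.

Lemma igen_deriv (G g : R -> R) (la lb : R) :
  (forall t, 0 < t -> is_derive G t (g t)) ->
  (forall t, 0 < t -> continuous g t) ->
  filterlim G (at_right 0) (locally la) ->
  filterlim G (Rbar_locally p_infty) (locally lb) ->
  is_RInt_gen g (at_right 0) (Rbar_locally p_infty) (lb - la).
Proof.
intros hd hc h0 hi.
assert (hD : forall t, 0 < t -> Derive G t = g t) by (intros; apply is_derive_unique; auto).
apply (is_RInt_gen_ext (Derive G)).
{ apply (Filter_prod _ _ _ (fun a => 0 < a) (fun b => 0 < b) at_right_pos pinf_pos).
  intros a b ha hb y hy. simpl in hy. apply hD.
  assert (0 < Rmin a b) by (apply Rmin_glb_lt; auto). lra. }
apply is_RInt_gen_Derive; auto.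
- apply (Filter_prod _ _ _ (fun a => 0 < a) (fun b => 0 < b) at_right_pos pinf_pos).
  intros a b ha hb y hy. simpl in hy.
  assert (0 < Rmin a b) by (apply Rmin_glb_lt; auto).
  exists (g y). apply hd. lra.
- apply (Filter_prod _ _ _ (fun a => 0 < a) (fun b => 0 < b) at_right_pos pinf_pos).
  intros a b ha hb y hy. simpl in hy.
  assert (0 < Rmin a b) by (apply Rmin_glb_lt; auto).
  apply (continuous_ext_loc (Derive G) g y). 2: apply hc; lra.
  assert (hy0 : 0 < y / 2) by lra.
  exists (mkposreal _ hy0). intros z hz. apply ball_R' in hz. simpl in hz.
  rewrite hD; [reflexivity|]. apply Rabs_def2 in hz. lra.
Qed.

Definition gf (x t : R) := Rpower t (x - 1) * exp (- t).

Lemma gf_exp x t : gf x t = exp ((x-1) * ln t - t).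
Proof. unfold gf, Rpower. rewrite <- exp_plus. f_equal. Qed.

Lemma gf_pos x t : 0 < gf x t.
Proof. rewrite gf_exp. apply exp_pos. Qed.

Lemma gf_cont x t : 0 < t -> continuous (gf x) t.
Proof.
intros ht. apply (ex_derive_continuous (gf x)).
apply (ex_derive_ext (fun t => exp ((x-1) * ln t - t))).
{ intros; now rewrite gf_exp. }
auto_derive. lra.
Qed.

Lemma gf_exRInt x a b : 0 < a -> 0 < b -> ex_RInt (gf x) a b.
Proof.
intros ha hb. apply (ex_RInt_continuous (V:=R_CompleteNormedModule)). intros z hz. apply gf_cont.
assert (0 < Rmin a b) by (apply Rmin_glb_lt; auto). lra.
Qed.

Lemma gf_le1 x t : 1 <= x -> 0 < t <= 1 -> gf x t <= 1.
Proof.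
intros hx ht. rewrite gf_exp. apply Rle_trans with (exp 0); [apply exp_le|rewrite exp_0; lra].
assert (ln t <= 0) by (rewrite <- ln_1; apply ln_le; lra).
assert (0 <= (x-1) * (- ln t)) by (apply Rmult_le_pos; lra). lra.
Qed.

Lemma sum_ge_last (f : nat -> R) n : (forall k, 0 <= f k) -> f n <= sum_f_R0 f n.
Proof.
intros h. destruct n; simpl. lra.
assert (hs : forall m, 0 <= sum_f_R0 f m).
{ intros m. induction m; simpl. apply h. specialize (h (S m)). lra. }
specialize (hs n). lra.
Qed.

Lemma pow_le_exp N t : 0 <= t -> t ^ N <= INR (fact N) * exp t.
Proof.
intros ht. pose proof (exp_ge_taylor t N ht) as H.
pose proof (sum_ge_last (fun k => t ^ k / INR (fact k)) N) as H2.
assert (hf : 0 < INR (fact N)) by (apply lt_0_INR, lt_O_fact).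
assert (t ^ N / INR (fact N) <= exp t).
{ eapply Rle_trans; [apply H2|exact H]. intros k. apply Rle_mult_inv_pos.
  apply pow_le; lra. apply lt_0_INR, lt_O_fact. }
apply (Rmult_le_reg_r (/ INR (fact N))). apply Rinv_0_lt_compat; lra.
replace (INR (fact N) * exp t * / INR (fact N)) with (exp t) by (field; lra).
exact H0.
Qed.

Lemma gf_bound_inf x : exists K, 0 < K /\ forall t, 1 <= t -> gf x t * t^2 <= K.
Proof.
destruct (INR_unbounded (x+1)) as [N hN].
exists (INR (fact N)). split. apply lt_0_INR, lt_O_fact.
intros t ht.
assert (e1 : gf x t * t^2 = Rpower t (x + 1) * exp (- t)).
{ unfold gf. replace (x+1) with ((x-1) + INR 2) by (simpl; ring).
  rewrite Rpower_plus, Rpower_pow by lra. ring. }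
rewrite e1.
assert (Rpower t (x+1) <= t ^ N).
{ rewrite <- Rpower_pow by lra. apply Rle_Rpower; lra. }
pose proof (pow_le_exp N t ltac:(lra)).
assert (hexp : exp t * exp (-t) = 1) by (rewrite <- exp_plus; replace (t + -t) with 0 by ring; apply exp_0).
assert (0 < exp (-t)) by apply exp_pos.
assert (Rpower t (x+1) * exp (-t) <= t^N * exp (-t)) by (apply Rmult_le_compat_r; lra).
assert (t^N * exp (-t) <= INR (fact N) * exp t * exp (-t)) by (apply Rmult_le_compat_r; lra).
rewrite Rmult_assoc, hexp, Rmult_1_r in H3. lra.
Qed.

Definition Fint (x b : R) := RInt (gf x) 1 b.

Lemma Fint_mono x a b : 0 < a -> a <= b -> Fint x a <= Fint x b.
Proof.
intros ha hab. unfold Fint.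
rewrite <- (RInt_Chasles (gf x) 1 a b) by (apply gf_exRInt; lra).
assert (0 <= RInt (gf x) a b).
{ apply RInt_ge_0; auto. apply gf_exRInt; lra. intros; apply Rlt_le, gf_pos. }
simpl. unfold plus; simpl. lra.
Qed.

Lemma Fint_lower x b : 1 <= x -> 0 < b -> -1 <= Fint x b.
Proof.
intros hx hb. unfold Fint.
destruct (Rle_lt_dec 1 b) as [h1|h1].
- assert (0 <= RInt (gf x) 1 b).
  { apply RInt_ge_0; auto. apply gf_exRInt; lra. intros; apply Rlt_le, gf_pos. }
  lra.
- rewrite <- opp_RInt_swap by (apply gf_exRInt; lra).
  assert (RInt (gf x) b 1 <= RInt (fun _ => 1) b 1).
  { apply RInt_le. lra. apply gf_exRInt; lra. apply ex_RInt_const.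
    intros t ht. apply gf_le1; lra. }
  rewrite RInt_const in H. unfold scal in H; simpl in H; unfold mult in H; simpl in H.
  unfold opp; simpl. nra.
Qed.

Lemma Fint_upper x : exists M, forall b, 0 < b -> Fint x b <= M.
Proof.
destruct (gf_bound_inf x) as [K [hK HK]].
exists K. intros b hb. unfold Fint.
destruct (Rle_lt_dec 1 b) as [h1|h1].
- assert (hi : is_RInt (fun t => K / t^2) 1 b (minus (- K / b) (- K / 1))).
  { apply (is_RInt_derive (fun t => - K / t)).
    - intros t ht. rewrite Rmin_left, Rmax_right in ht by lra. auto_derive. lra. field. lra.
    - intros t ht. rewrite Rmin_left, Rmax_right in ht by lra.
      apply (ex_derive_continuous (fun t => K / t^2)). auto_derive. nra. }
  assert (RInt (gf x) 1 b <= RInt (fun t => K / t^2) 1 b).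
  { apply RInt_le. lra. apply gf_exRInt; lra. eexists; exact hi.
    intros t ht. specialize (HK t ltac:(lra)).
    apply (Rmult_le_reg_r (t^2)). nra. unfold Rdiv. rewrite Rmult_assoc, Rinv_l by nra. lra. }
  rewrite (is_RInt_unique _ _ _ _ hi) in H. unfold minus, plus, opp in H; simpl in H.
  assert (0 < K / b) by (apply Rdiv_lt_0_compat; lra). lra.
- rewrite <- opp_RInt_swap by (apply gf_exRInt; lra).
  assert (0 <= RInt (gf x) b 1).
  { apply RInt_ge_0. lra. apply gf_exRInt; lra. intros; apply Rlt_le, gf_pos. }
  unfold opp; simpl. lra.
Qed.

Lemma Fint_deriv x y : 0 < y -> is_derive (Fint x) y (gf x y).
Proof.
intros hy. unfold Fint. apply (is_derive_RInt (gf x) (fun b => RInt (gf x) 1 b) 1 y); [|apply gf_cont; lra].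
assert (hy0 : 0 < y / 2) by lra.
exists (mkposreal _ hy0). intros z hz. apply ball_R' in hz. simpl in hz.
apply Rabs_def2 in hz. apply (RInt_correct (V:=R_CompleteNormedModule)), gf_exRInt; lra.
Qed.

Lemma ProperFilter'_at_right : ProperFilter' (at_right 0).
Proof. apply Proper_StrongProper, at_right_proper_filter. Qed.
Lemma ProperFilter'_pinf : ProperFilter' (Rbar_locally p_infty).
Proof. apply Proper_StrongProper, Rbar_locally_filter. Qed.

Lemma Gamma_is x : 1 <= x -> is_RInt_gen (gf x) (at_right 0) (Rbar_locally p_infty) (Gamma x).
Proof.
intros hx.
destruct (Fint_upper x) as [M HM].
destruct (mono_lim_pinf (Fint x) M (Fint_mono x) HM) as [lb hlb].
destruct (mono_lim_right0 (Fint x) (-1) (Fint_mono x) (fun b hb => Fint_lower x b hx hb)) as [la hla].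
assert (H := igen_deriv (Fint x) (gf x) la lb (Fint_deriv x) (gf_cont x) hla hlb).
replace (Gamma x) with (lb - la). exact H.
symmetry. unfold Gamma. apply (is_RInt_gen_unique (Fa := at_right 0) (Fb := Rbar_locally p_infty)).
exact H.
Qed.

Lemma gf_mul_t x t : 0 < t -> gf x t * t = exp (x * ln t - t).
Proof.
intros ht. rewrite gf_exp.
replace (exp ((x-1)*ln t - t) * t) with (exp ((x-1)*ln t - t) * exp (ln t)) by (rewrite exp_ln; auto).
rewrite <- exp_plus. f_equal. ring.
Qed.

Lemma Gamma_rec x : 1 <= x -> Gamma (x + 1) = x * Gamma x.
Proof.
intros hx.
destruct (gf_bound_inf x) as [K [hK HK]].
set (H := fun t => - exp (x * ln t - t)).
assert (hd : forall t, 0 < t -> is_derive H t (gf (x+1) t - x * gf x t)).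
{ intros t ht. unfold H.
  assert (e1 : gf (x+1) t = exp (x * ln t - t)).
  { rewrite gf_exp. f_equal. ring. }
  assert (e2 : gf x t = exp (x * ln t - t) / t).
  { rewrite <- (gf_mul_t x t ht). field. lra. }
  rewrite e1, e2. auto_derive. lra. unfold Rminus. field. lra. }
assert (hc : forall t, 0 < t -> continuous (fun t => gf (x+1) t - x * gf x t) t).
{ intros t ht. apply (continuous_minus (gf (x+1)) (fun t => x * gf x t)).
  apply gf_cont; lra. apply (continuous_scal_r x (gf x)). apply gf_cont; lra. }
assert (h0 : filterlim H (at_right 0) (locally 0)).
{ apply lim_right0_of. intros eps he. exists (Rmin eps 1). split.
  apply Rmin_glb_lt; lra. intros t ht.
  assert (ht1 : t < 1) by (pose proof (Rmin_r eps 1); lra).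
  assert (ht2 : t < eps) by (pose proof (Rmin_l eps 1); lra).
  unfold H. rewrite Rminus_0_r, Rabs_Ropp, Rabs_right by (apply Rle_ge, Rlt_le, exp_pos).
  apply Rle_lt_trans with (exp (ln t)); [|rewrite exp_ln; lra].
  apply exp_le.
  assert (ln t <= 0) by (rewrite <- ln_1; apply ln_le; lra).
  assert (0 <= (x-1) * (- ln t)) by (apply Rmult_le_pos; lra). lra. }
assert (hi : filterlim H (Rbar_locally p_infty) (locally 0)).
{ apply lim_pinf_of. intros eps he. exists (Rmax 1 (K/eps)). intros t ht.
  assert (ht1 : 1 < t) by (pose proof (Rmax_l 1 (K/eps)); lra).
  assert (ht2 : K/eps < t) by (pose proof (Rmax_r 1 (K/eps)); lra).
  unfold H. rewrite Rminus_0_r, Rabs_Ropp, Rabs_right by (apply Rle_ge, Rlt_le, exp_pos).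
  rewrite <- gf_mul_t by lra.
  specialize (HK t ltac:(lra)).
  assert (K < eps * t).
  { apply (Rmult_lt_reg_r (/eps)). apply Rinv_0_lt_compat; lra.
    replace (eps * t * / eps) with t by (field; lra). exact ht2. }
  assert (0 < gf x t) by apply gf_pos. nra. }
pose proof (igen_deriv H _ 0 0 hd hc h0 hi) as HR.
pose proof (is_RInt_gen_scal _ x _ (Gamma_is x hx)) as HG.
pose proof (is_RInt_gen_plus _ _ _ _ HR HG) as HS.
unfold Gamma at 1. apply (is_RInt_gen_unique (Fa := at_right 0) (Fb := Rbar_locally p_infty)).
replace (x * Gamma x) with (plus (0 - 0) (scal x (Gamma x))).
2:{ unfold plus, scal; simpl. unfold mult; simpl. ring. }
eapply is_RInt_gen_ext; [|exact HS].
apply (Filter_prod _ _ _ (fun a => 0 < a) (fun b => 0 < b) at_right_pos pinf_pos).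
intros a b ha hb y hy. unfold plus, scal; simpl. unfold mult; simpl. unfold gf. ring.
Qed.

Lemma Gamma_1 : Gamma 1 = 1.
Proof.
set (H := fun t => - exp (- t)).
assert (hd : forall t, 0 < t -> is_derive H t (gf 1 t)).
{ intros t ht. unfold H, gf. replace (1-1) with 0 by ring. rewrite Rpower_O by lra.
  auto_derive; [trivial|]. ring. }
assert (hc : forall t, 0 < t -> continuous (gf 1) t) by (intros; apply gf_cont; lra).
assert (h0 : filterlim H (at_right 0) (locally (-1))).
{ apply lim_right0_of. intros eps he. exists eps. split; [lra|]. intros t ht.
  unfold H. pose proof (exp_ineq1_le (-t)).
  assert (exp (-t) <= 1) by (rewrite <- exp_0; apply exp_le; lra).
  rewrite Rabs_right by lra. lra. }
assert (hi : filterlim H (Rbar_locally p_infty) (locally 0)).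
{ apply lim_pinf_of. intros eps he. exists (Rmax 1 (/eps)). intros t ht.
  assert (ht1 : 1 < t) by (pose proof (Rmax_l 1 (/eps)); lra).
  assert (ht2 : /eps < t) by (pose proof (Rmax_r 1 (/eps)); lra).
  unfold H. rewrite Rminus_0_r, Rabs_Ropp, Rabs_right by (apply Rle_ge, Rlt_le, exp_pos).
  pose proof (exp_ineq1_le t).
  assert (hh : exp t * exp (-t) = 1) by (rewrite <- exp_plus; replace (t + -t) with 0 by ring; apply exp_0).
  assert (1 < eps * t).
  { apply (Rmult_lt_reg_r (/eps)). apply Rinv_0_lt_compat; lra.
    replace (eps * t * / eps) with t by (field; lra). lra. }
  assert (0 < exp (-t)) by apply exp_pos. nra. }
pose proof (igen_deriv H _ _ _ hd hc h0 hi) as HR.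
unfold Gamma. apply (is_RInt_gen_unique (Fa := at_right 0) (Fb := Rbar_locally p_infty)).
assert (e : 0 - -1 = 1) by ring. rewrite e in HR. exact HR.
Qed.

Lemma Gamma_half x : 1 <= x -> Gamma (x + /2) <= sqrt x * Gamma x.
Proof.
intros hx.
assert (hsx : 0 < sqrt x) by (apply sqrt_lt_R0; lra).
pose proof (is_RInt_gen_scal _ (sqrt x / 2) _ (Gamma_is x hx)) as H1.
assert (hx1 : 1 <= x + 1) by lra.
pose proof (is_RInt_gen_scal _ (/ (2 * sqrt x)) _ (Gamma_is (x+1) hx1)) as H2.
pose proof (is_RInt_gen_plus _ _ _ _ H1 H2) as H3.
assert (H4 : is_RInt_gen (gf (x + /2)) (at_right 0) (Rbar_locally p_infty) (Gamma (x + /2)))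
  by (apply Gamma_is; lra).
assert (hr : plus (scal (sqrt x / 2) (Gamma x)) (scal (/ (2 * sqrt x)) (Gamma (x + 1))) = sqrt x * Gamma x).
{ rewrite Gamma_rec by lra. unfold plus, scal; simpl; unfold mult; simpl.
  assert (hsx2: sqrt x * sqrt x = x) by (apply sqrt_sqrt; lra).
  replace (x * Gamma x) with (sqrt x * sqrt x * Gamma x) by (rewrite hsx2; ring). field. lra. }
rewrite <- hr. apply Rle_trans with (norm (Gamma (x + /2))).
{ unfold norm; simpl. unfold abs; simpl. apply Rle_abs. }
eapply (RInt_gen_norm (V:=R_CompleteNormedModule) (Fa:=at_right 0) (Fb:=Rbar_locally p_infty)); [ | | exact H4 | exact H3].
- apply (Filter_prod _ _ _ (fun a => 0 < a < 1) (fun b => 1 < b)).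
  + unfold at_right, within. exists (mkposreal 1 Rlt_0_1). intros y hy hy0.
    apply ball_R' in hy. simpl in hy. rewrite Rminus_0_r, Rabs_right in hy by lra. lra.
  + exists 1. auto.
  + intros a b ha hb. simpl. lra.
- apply (Filter_prod _ _ _ (fun a => 0 < a) (fun b => 1 < b) at_right_pos).
  + exists 1. auto.
  + intros a b ha hb y hy. simpl in hy |- *.
    assert (hy0 : 0 < y) by lra.
    unfold norm; simpl; unfold abs; simpl.
    rewrite Rabs_right by (apply Rle_ge, Rlt_le, gf_pos).
    unfold plus, scal; simpl; unfold mult; simpl.
    assert (e1 : gf (x + /2) y = gf x y * sqrt y).
    { unfold gf. replace (x + /2 - 1) with ((x - 1) + /2) by ring.
      rewrite Rpower_plus, Rpower_sqrt by lra. ring. }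
    assert (e2 : gf (x + 1) y = gf x y * y).
    { unfold gf. replace (x + 1 - 1) with ((x - 1) + 1) by ring.
      rewrite Rpower_plus, Rpower_1 by lra. ring. }
    rewrite e1, e2.
    assert (hg : 0 < gf x y) by apply gf_pos.
    assert (hsy : 0 <= sqrt y) by apply sqrt_pos.
    assert (hsy2 : sqrt y * sqrt y = y) by (apply sqrt_sqrt; lra).
    assert (hsx2 : sqrt x * sqrt x = x) by (apply sqrt_sqrt; lra).
    assert (key : sqrt y <= sqrt x / 2 + y / (2 * sqrt x)).
    { apply (Rmult_le_reg_r (2 * sqrt x)); [lra|].
      replace ((sqrt x / 2 + y / (2 * sqrt x)) * (2 * sqrt x)) with (x + y) by (field_simplify; [nra|lra]).
      replace (x + y) with (sqrt x * sqrt x + sqrt y * sqrt y) by (rewrite hsx2, hsy2; ring).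
      assert (0 <= (sqrt x - sqrt y)^2) by apply pow2_ge_0. nra. }
    replace (sqrt x / 2 * gf x y + / (2 * sqrt x) * (gf x y * y)) with
       (gf x y * (sqrt x / 2 + y / (2 * sqrt x))) by (field; lra).
    apply Rmult_le_compat_l; lra.
Qed.

Definition Wi (n : nat) := RInt (fun t => sin t ^ n) 0 (PI/2).

Lemma Wi_ex n : ex_RInt (fun t => sin t ^ n) 0 (PI/2).
Proof.
apply (ex_RInt_continuous (V:=R_CompleteNormedModule)). intros z hz.
apply (ex_derive_continuous (fun t => sin t ^ n)). auto_derive. trivial.
Qed.

Lemma Wi0 : Wi 0 = PI/2.
Proof. unfold Wi. simpl. rewrite RInt_const. unfold scal; simpl; unfold mult; simpl. ring. Qed.

Lemma Wi1 : Wi 1 = 1.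
Proof.
unfold Wi. apply is_RInt_unique.
assert (H : is_RInt (fun t => sin t) 0 (PI/2) (minus (- cos (PI/2)) (- cos 0))).
{ apply (is_RInt_derive (fun t => - cos t)).
  - intros. auto_derive; [trivial|]. ring.
  - intros. apply (ex_derive_continuous sin). auto_derive. trivial. }
rewrite cos_PI2, cos_0 in H. unfold minus, plus, opp in H; simpl in H.
match type of H with is_RInt _ _ _ ?v => replace v with 1 in H by ring end.
apply (is_RInt_ext (fun t => sin t)); [|exact H]. intros; simpl; ring.
Qed.

Lemma Wi_rec n : INR (n+2) * Wi (n+2) = INR (n+1) * Wi n.
Proof.
set (g := fun t => INR (n+2) * sin t ^ (n+2) - INR (n+1) * sin t ^ n).
assert (H1 : is_RInt g 0 (PI/2) (minus (- cos (PI/2) * sin (PI/2) ^ (n+1)) (- cos 0 * sin 0 ^ (n+1)))).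
{ apply (is_RInt_derive (fun t => - cos t * sin t ^ (n+1))).
  - intros x hx. unfold g. auto_derive; [trivial|].
    replace (pred (n+1)) with n by lia.
    replace (sin x ^ (n+2)) with (sin x ^ n * (sin x * sin x)) by (rewrite pow_add; simpl; ring).
    replace (sin x ^ (n+1)) with (sin x ^ n * sin x) by (rewrite pow_add; simpl; ring).
    rewrite !plus_INR. simpl.
    assert (hc : sin x * sin x + cos x * cos x = 1) by (pose proof (sin2_cos2 x) as hh; unfold Rsqr in hh; exact hh).
    assert (h := f_equal (fun z => (INR n + 1) * sin x ^ n * z) hc). cbv beta in h. lra.
  - intros x hx. apply (ex_derive_continuous g). unfold g. auto_derive. auto. }
rewrite cos_PI2, cos_0, sin_0 in H1. rewrite pow_i in H1 by lia.
assert (H2 : is_RInt g 0 (PI/2) (minus (scal (INR (n+2)) (Wi (n+2))) (scal (INR (n+1)) (Wi n)))).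
{ apply (is_RInt_ext (fun y => minus (scal (INR (n+2)) (sin y ^ (n+2))) (scal (INR (n+1)) (sin y ^ n)))).
  { intros; unfold g, minus, plus, opp, scal; simpl; unfold mult; simpl. ring. }
  pose proof (RInt_correct (V:=R_CompleteNormedModule) _ _ _ (Wi_ex (n+2))) as A.
  pose proof (RInt_correct (V:=R_CompleteNormedModule) _ _ _ (Wi_ex n)) as B.
  pose proof (is_RInt_scal _ _ _ (INR (n+2)) _ A) as A'.
  pose proof (is_RInt_scal _ _ _ (INR (n+1)) _ B) as B'.
  pose proof (is_RInt_minus _ _ _ _ _ _ A' B') as C. unfold Wi. exact C. }
apply (is_RInt_unique (V:=R_CompleteNormedModule)) in H1. apply (is_RInt_unique (V:=R_CompleteNormedModule)) in H2. rewrite H1 in H2.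
unfold minus, plus, opp, scal in H2; simpl in H2; unfold mult in H2; simpl in H2. lra.
Qed.

Lemma Wi_pos n : 0 < Wi n /\ 0 < Wi (S n).
Proof.
induction n as [|n [IH1 IH2]].
- rewrite Wi0, Wi1. split; [pose proof PI_RGT_0; lra | lra].
- split; [exact IH2|].
  pose proof (Wi_rec n) as H. replace (S (S n)) with (n+2)%nat by lia.
  assert (0 < INR (n+2)) by (apply lt_0_INR; lia).
  assert (0 < INR (n+1)) by (apply lt_0_INR; lia).
  apply (Rmult_lt_reg_l (INR (n+2))); [lra|]. rewrite H. nra.
Qed.

Lemma Wi_mono n : Wi (S n) <= Wi n.
Proof.
unfold Wi. apply RInt_le. pose proof PI_RGT_0; lra. apply Wi_ex. apply Wi_ex.
intros x hx. assert (0 <= sin x) by (apply sin_ge_0; lra).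
pose proof (SIN_bound x). assert (0 <= sin x ^ n) by (apply pow_le; lra).
simpl. nra.
Qed.

Definition Fr (k : nat) := INR (fact k).

Lemma Fr_pos k : 0 < Fr k.
Proof. apply lt_0_INR, lt_O_fact. Qed.

Lemma Fr_S k : Fr (S k) = INR (S k) * Fr k.
Proof. unfold Fr. rewrite fact_simpl, mult_INR. reflexivity. Qed.

Lemma Wi_closed j : Wi (2*j) = PI/2 * Fr (2*j) / (4^j * Fr j ^ 2) /\
                   Wi (2*j+1) = 4^j * Fr j ^ 2 / Fr (2*j+1).
Proof.
induction j as [|j [IH1 IH2]].
- simpl. rewrite Wi0. replace (Wi 1) with 1 by (symmetry; apply Wi1). unfold Fr; simpl. split; field.
- assert (hF := Fr_pos j). assert (hF2 := Fr_pos (2*j)).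
  pose proof (Wi_rec (2*j)) as R1. pose proof (Wi_rec (2*j+1)) as R2.
  replace (2 * S j)%nat with (2*j+2)%nat by lia.
  replace (2 * j + 2 + 1)%nat with (2*j+1+2)%nat by lia.
  rewrite IH1 in R1. rewrite IH2 in R2.
  assert (hj : Fr (2*j+2) = INR (2*j+2) * INR (2*j+1) * Fr (2*j)).
  { replace (2*j+2)%nat with (S (S (2*j))) by lia. rewrite !Fr_S.
    replace (2*j+1)%nat with (S (2*j)) by lia. ring. }
  assert (hj1 : Fr (2*j+1) = INR (2*j+1) * Fr (2*j)).
  { replace (2*j+1)%nat with (S (2*j)) by lia. rewrite Fr_S. ring. }
  assert (hj3 : Fr (2*j+1+2) = INR (2*j+1+2) * INR (2*j+2) * Fr (2*j+1)).
  { replace (2*j+1+2)%nat with (S (S (2*j+1))) by lia. rewrite !Fr_S.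
    replace (2*j+2)%nat with (S (2*j+1)) by lia. ring. }
  rewrite Fr_S.
  assert (e1 : INR (2*j+2) = 2 * INR (S j)) by (rewrite S_INR, plus_INR, mult_INR; simpl; ring).
  assert (e2 : INR (2*j+1+2) = INR (2*j+1) + 2) by (rewrite !plus_INR; simpl; ring).
  assert (0 < INR (S j)) by (apply lt_0_INR; lia).
  assert (0 < INR (2*j+1)) by (apply lt_0_INR; lia).
  change (4 ^ S j) with (4 * 4 ^ j). assert (0 < 4^j) by (apply pow_lt; lra). split.
  + rewrite hj. rewrite e1 in R1 |- *.
    apply (Rmult_eq_reg_l (2 * INR (S j))); [|lra]. rewrite R1. field. repeat split; lra.
  + assert (e3 : INR (2*j+1+1) = 2 * INR (S j)) by (rewrite S_INR, !plus_INR, mult_INR; simpl; ring).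
    rewrite e2, e3 in R2. rewrite hj3, e1, e2, hj1. rewrite hj1 in R2.
    apply (Rmult_eq_reg_l (INR (2*j+1) + 2)); [|lra]. rewrite R2. field. repeat split; lra.
Qed.

Lemma wallis_ineq j : (1 <= j)%nat ->
  PI/2 * INR (2*j) * Fr (2*j) ^ 2 <= 16^j * Fr j ^ 4 /\
  16^j * Fr j ^ 4 <= PI/2 * INR (2*j+1) * Fr (2*j) ^ 2.
Proof.
intros hj. destruct (Wi_closed j) as [E1 E2].
assert (hF := Fr_pos j). assert (hF2 := Fr_pos (2*j)).
assert (hj1 : Fr (2*j+1) = INR (2*j+1) * Fr (2*j)).
{ replace (2*j+1)%nat with (S (2*j)) by lia. rewrite Fr_S. ring. }
assert (h16 : 16^j = 4^j * 4^j) by (rewrite <- Rpow_mult_distr; f_equal; ring).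
assert (h4 : 0 < 4^j) by (apply pow_lt; lra).
assert (hpi := PI_RGT_0).
assert (0 < INR (2*j)) by (apply lt_0_INR; lia).
assert (0 < INR (2*j+1)) by (apply lt_0_INR; lia).
split.
-
  destruct j as [|i]; [lia|].
  pose proof (Wi_mono (2*S i - 1)) as M. replace (S (2 * S i - 1)) with (2 * S i)%nat in M by lia.
  pose proof (Wi_rec (2*S i - 1)) as R. replace (2 * S i - 1 + 2)%nat with (2*S i+1)%nat in R by lia.
  replace (2 * S i - 1 + 1)%nat with (2*S i)%nat in R by lia.
  assert (M2 : Wi (2*S i) * INR (2*S i) <= INR (2*S i+1) * Wi (2*S i+1)).
  { rewrite R. nra. }
  rewrite E1, E2, hj1 in M2. rewrite h16.
  set (a := INR (2 * S i)) in *. set (b := INR (2 * S i + 1)) in *.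
  set (F1 := Fr (S i)) in *. set (F2 := Fr (2 * S i)) in *. set (q := 4 ^ S i) in *.
  assert (e : PI / 2 * F2 / (q * F1 ^ 2) * a = (PI/2 * a * F2^2) / (q * F1^2 * F2)) by (field; lra).
  assert (e' : b * (q * F1 ^ 2 / (b * F2)) = (q * q * F1^4) / (q * F1^2 * F2)) by (field; lra).
  rewrite e, e' in M2.
  apply Rmult_le_reg_r with (/ (q * F1^2 * F2)). apply Rinv_0_lt_compat. apply Rmult_lt_0_compat; [apply Rmult_lt_0_compat|]; [lra| apply pow_lt; lra | lra].
  exact M2.
- pose proof (Wi_mono (2*j)) as M. replace (S (2*j)) with (2*j+1)%nat in M by lia.
  rewrite E1, E2, hj1 in M. rewrite h16.
  set (b := INR (2 * j + 1)) in *.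
  set (F1 := Fr j) in *. set (F2 := Fr (2 * j)) in *. set (q := 4 ^ j) in *.
  assert (e : q * F1 ^ 2 / (b * F2) = (q * q * F1^4) / (q * F1^2 * b * F2)) by (field; lra).
  assert (e' : PI / 2 * F2 / (q * F1 ^ 2) = (PI/2 * b * F2^2) / (q * F1^2 * b * F2)) by (field; lra).
  rewrite e, e' in M.
  apply Rmult_le_reg_r with (/ (q * F1^2 * b * F2)). apply Rinv_0_lt_compat.
  apply Rmult_lt_0_compat; [|lra]. apply Rmult_lt_0_compat; [|lra]. apply Rmult_lt_0_compat; [lra|apply pow_lt; lra].
  exact M.
Qed.

Definition Gm (n : nat) := Gamma (INR n / 2 + 1).

Lemma Gamma_nat k : Gamma (INR k + 1) = Fr k.
Proof.
induction k as [|k IH].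
- simpl. replace (0+1) with 1 by ring. rewrite Gamma_1. reflexivity.
- rewrite S_INR, Gamma_rec. rewrite IH, Fr_S, S_INR. ring.
  pose proof (pos_INR k). lra.
Qed.

Lemma Gm_even k : Gm (2*k) = Fr k.
Proof. unfold Gm. rewrite mult_INR. replace (INR 2) with 2 by (simpl; ring). replace (2 * INR k / 2 + 1) with (INR k + 1) by field.
exact (Gamma_nat k). Qed.

Lemma Gm_rec n : Gm (n+2) = (INR n / 2 + 1) * Gm n.
Proof. unfold Gm. rewrite plus_INR. replace (INR 2) with 2 by (simpl; ring).
replace ((INR n + 2) / 2 + 1) with ((INR n / 2 + 1) + 1) by field.
apply Gamma_rec. pose proof (pos_INR n). lra. Qed.

Lemma Gm_odd k : Gm (2*k+1) = Gamma (INR k + 1 + /2).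
Proof. unfold Gm. f_equal. rewrite plus_INR, mult_INR. simpl. field. Qed.

Lemma Gm_odd_up k : Gm (2*k+1) <= sqrt (INR k + 1) * Fr k.
Proof. rewrite Gm_odd, <- Gamma_nat. apply Gamma_half. pose proof (pos_INR k). lra. Qed.

Lemma Gm_odd_lo k : Fr (k+1) <= sqrt (INR k + 1 + /2) * Gm (2*k+1).
Proof.
rewrite Gm_odd, <- Gamma_nat. rewrite plus_INR. replace (INR 1) with 1 by reflexivity.
replace (INR k + 1 + 1) with ((INR k + 1 + /2) + /2) by field.
apply Gamma_half. pose proof (pos_INR k). lra.
Qed.

Lemma Gm_pos n : 0 < Gm n.
Proof.
destruct (Nat.Even_or_Odd n) as [[k ->]|[k ->]].
- rewrite Gm_even. apply Fr_pos.
- pose proof (Gm_odd_lo k). pose proof (Fr_pos (k+1)).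
  assert (0 < sqrt (INR k + 1 + /2)) by (apply sqrt_lt_R0; pose proof (pos_INR k); lra).
  destruct (Rle_or_lt (Gm (2*k+1)) 0) as [h|h]; [|exact h]. nra.
Qed.

Lemma ln_sqrt y : 0 < y -> ln (sqrt y) = ln y / 2.
Proof.
intros hy. assert (h := sqrt_sqrt y (Rlt_le _ _ hy)).
assert (0 < sqrt y) by (apply sqrt_lt_R0; lra).
rewrite <- h at 2. rewrite ln_mult by lra. field.
Qed.

Lemma ln_Rpower a b : ln (Rpower a b) = b * ln a.
Proof. unfold Rpower. apply ln_exp. Qed.

Definition Ef (c : R) (n : nat) :=
  - ln (Gm n) + ln (PI * (INR n + c)) / 2 - INR n / 2 * (ln 2 + 1 - ln (INR n)).

Lemma Omega_pos n : 0 < Omega n.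
Proof. unfold Omega. apply Rdiv_lt_0_compat. unfold Rpower; apply exp_pos. apply Gm_pos. Qed.

Lemma vol_pos c n : 0 < INR n + c -> 0 < vol_bound c n.
Proof.
intros h. unfold vol_bound. apply Rmult_lt_0_compat.
- apply Rinv_0_lt_compat, sqrt_lt_R0. pose proof PI_RGT_0. nra.
- unfold Rpower; apply exp_pos.
Qed.

Lemma ell_eq c n : (1 <= n)%nat -> 0 < INR n + c ->
  ln (Omega n) - ln (vol_bound c n) = Ef c n.
Proof.
intros hn hc. assert (hx : 1 <= INR n) by (apply (le_INR 1); lia).
pose proof PI_RGT_0 as hpi.
unfold Omega, vol_bound, Ef.
rewrite ln_div by (try (unfold Rpower; apply exp_pos); apply Gm_pos).
rewrite ln_mult by (try (apply Rinv_0_lt_compat, sqrt_lt_R0; nra); unfold Rpower; apply exp_pos).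
rewrite ln_Rinv by (apply sqrt_lt_R0; nra).
rewrite ln_sqrt by nra. rewrite !ln_Rpower.
rewrite ln_div by (try lra; pose proof exp_pos 1; nra).
rewrite !ln_mult by (try lra; try nra; apply exp_pos).
rewrite ln_exp. change (Gamma (INR n / 2 + 1)) with (Gm n). ring.
Qed.

Lemma theta_eq n : theta n = thR (INR n).
Proof. reflexivity. Qed.
Lemma nu_eq n : nu n = nuR (INR n).
Proof. reflexivity. Qed.

Lemma thR_bnd y : 1 <= y -> 0 < thR y < 1.
Proof.
intros hy. unfold thR. set (w := / y).
assert (hw : 0 < w <= 1).
{ unfold w. split. apply Rinv_0_lt_compat; lra.
  rewrite <- Rinv_1. apply Rinv_le_contravar; lra. }
replace (1 / (18 * y)) with (w / 18) by (unfold w; field; lra).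
replace (31 / (810 * y^2)) with (31 * w^2 / 810) by (unfold w; field; lra).
split; nra.
Qed.

Lemma nuR_bnd y : 1 <= y -> 0 < nuR y < 1 /\ nuR y <= thR y.
Proof.
intros hy. pose proof (thR_bnd y hy). unfold nuR in *. unfold thR in *. set (w := / y) in *.
assert (hw : 0 < w <= 1).
{ unfold w. split. apply Rinv_0_lt_compat; lra.
  rewrite <- Rinv_1. apply Rinv_le_contravar; lra. }
replace (1 / (18 * y)) with (w / 18) in * by (unfold w; field; lra).
replace (31 / (810 * y^2)) with (31 * w^2 / 810) in * by (unfold w; field; lra).
replace (139 / (9720 * y^3)) with (139 * w^3 / 9720) in * by (unfold w; field; lra).
assert (0 < w^3) by (apply pow_lt; lra). assert (w^3 <= 1) by (rewrite <- (pow1 3); apply pow_incr; lra).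
assert (w^2 <= 1) by (rewrite <- (pow1 2); apply pow_incr; lra).
split; [split|]; nra.
Qed.

Lemma INR_p2 n : INR (n+2) = INR n + 2.
Proof. rewrite plus_INR. simpl. ring. Qed.

Lemma Ef_step (cR : R -> R) n : (1 <= n)%nat -> (forall y, 1 <= y -> 0 < cR y < 1) ->
  Ef (cR (INR (n+2))) (n+2) - Ef (cR (INR n)) n = - Dfun cR (INR n) / 2.
Proof.
intros hn hc. assert (hx : 1 <= INR n) by (apply (le_INR 1); lia).
rewrite INR_p2. set (x := INR n) in *.
assert (h1 := hc x hx). assert (h2 := hc (x+2) ltac:(lra)).
pose proof PI_RGT_0 as hpi.
unfold Ef, Dfun, Lz, vv. rewrite INR_p2. fold x. rewrite Gm_rec. fold x.
replace ((1 + / (x + 1)) / (1 - / (x + 1))) with ((x+2)/x) by (field; lra).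
set (A := x + 2 + cR (x + 2)). set (B := x + cR x).
assert (hA : 0 < A) by (unfold A; lra). assert (hB : 0 < B) by (unfold B; lra).
replace ((1 + (A - B) / (A + B)) / (1 - (A - B) / (A + B))) with (A / B) by (field; lra).
replace (x / 2 + 1) with ((x + 2) / 2) by field.
replace (x + 2 + cR (x+2)) with A by reflexivity. replace (x + cR x) with B by reflexivity.
rewrite !ln_mult by (try apply Gm_pos; lra).
rewrite !ln_div by (try apply Gm_pos; lra).
field.
Qed.

Definition Tq n := Ef (theta n) n.
Definition Nq n := Ef (nu n) n.

Lemma T_step n : (4 <= n)%nat -> Tq (n+2) < Tq n.
Proof.
intros hn. unfold Tq. rewrite !theta_eq.
assert (h := Ef_step thR n ltac:(lia) thR_bnd).
assert (4 <= INR n) by (apply le_INR in hn; simpl in hn; lra).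
pose proof (DT_pos (INR n) H). lra.
Qed.

Lemma N_step n : (1 <= n)%nat -> Nq n < Nq (n+2).
Proof.
intros hn. unfold Nq. rewrite !nu_eq.
assert (h := Ef_step nuR n hn (fun y hy => proj1 (nuR_bnd y hy))).
assert (1 <= INR n) by (apply (le_INR 1); lia).
pose proof (DN_neg (INR n) H). lra.
Qed.

Lemma T_7_3 : Tq 7 < Tq 3.
Proof.
unfold Tq. rewrite !theta_eq.
assert (h1 := Ef_step thR 3 ltac:(lia) thR_bnd).
assert (h2 := Ef_step thR 5 ltac:(lia) thR_bnd).
simpl (3+2)%nat in h1. simpl (5+2)%nat in h2.
replace (INR 3) with 3 in * by (simpl; ring). replace (INR 5) with 5 in * by (simpl; ring).
pose proof DT35. lra.
Qed.

Lemma T_mono n m : (4 <= n)%nat -> Tq (n + 2*m) <= Tq n.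
Proof.
intros hn. induction m as [|m IH].
- replace (n + 2*0)%nat with n by lia. lra.
- replace (n + 2 * S m)%nat with ((n + 2*m) + 2)%nat by lia.
  pose proof (T_step (n + 2*m) ltac:(lia)). lra.
Qed.

Lemma N_mono n m : (1 <= n)%nat -> Nq n <= Nq (n + 2*m).
Proof.
intros hn. induction m as [|m IH].
- replace (n + 2*0)%nat with n by lia. lra.
- replace (n + 2 * S m)%nat with ((n + 2*m) + 2)%nat by lia.
  pose proof (N_step (n + 2*m) ltac:(lia)). lra.
Qed.

Lemma ln_le_sub1 a : 0 < a -> ln a <= a - 1.
Proof.
intros ha. pose proof (exp_ineq1_le (a - 1)).
rewrite <- (ln_exp (a-1)). apply ln_le; lra.
Qed.

Lemma ln_ge_1sub a : 0 < a -> 1 - / a <= ln a.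
Proof.
intros ha. assert (0 < /a) by (apply Rinv_0_lt_compat; lra).
pose proof (ln_le_sub1 (/a) H). rewrite ln_Rinv in H0 by lra. lra.
Qed.

Lemma gap n : (1 <= n)%nat -> 0 <= Tq n - Nq n <= 1 / INR n.
Proof.
intros hn. assert (hx : 1 <= INR n) by (apply (le_INR 1); lia).
unfold Tq, Nq, Ef. rewrite theta_eq, nu_eq.
destruct (nuR_bnd (INR n) hx) as [[h1 h2] h3]. pose proof (thR_bnd (INR n) hx).
pose proof PI_RGT_0.
rewrite !ln_mult by lra.
set (x := INR n) in *.
assert (ln (x + nuR x) <= ln (x + thR x)) by (apply ln_le; lra).
assert (e : ln (x + thR x) - ln (x + nuR x) = ln ((x + thR x) / (x + nuR x))) by (rewrite ln_div; lra).
pose proof (ln_le_sub1 ((x + thR x) / (x + nuR x)) ltac:(apply Rdiv_lt_0_compat; lra)).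
assert ((x + thR x) / (x + nuR x) - 1 <= 1 / x).
{ replace ((x + thR x) / (x + nuR x) - 1) with ((thR x - nuR x) / (x + nuR x)) by (field; lra).
  apply Rle_trans with ((thR x - nuR x) / x).
  - unfold Rdiv. apply Rmult_le_compat_l; [lra|]. apply Rinv_le_contravar; lra.
  - unfold Rdiv. apply Rmult_le_compat_r. apply Rlt_le, Rinv_0_lt_compat; lra. lra. }
split; lra.
Qed.

Lemma wallis_E (c : nat -> R) j : (1 <= j)%nat -> (forall n, (1 <= n)%nat -> 0 < c n < 1) ->
  4 * Ef (c (2*j)%nat) (2*j) - 2 * Ef (c (2*(2*j))%nat) (2*(2*j))
    <= 2 * ln (2 * INR j + c (2*j)%nat) - ln (INR j) - ln (4 * INR j + c (2*(2*j))%nat) /\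
  2 * Ef (c (2*(2*j))%nat) (2*(2*j)) - 4 * Ef (c (2*j)%nat) (2*j)
    <= ln (2 * INR j + 1) + ln (4 * INR j + c (2*(2*j))%nat) - ln 2 - 2 * ln (2 * INR j + c (2*j)%nat).
Proof.
intros hj hc.
assert (hx : 1 <= INR j) by (apply (le_INR 1); lia).
destruct (hc (2*j)%nat ltac:(lia)) as [hc1 hc2].
destruct (hc (2*(2*j))%nat ltac:(lia)) as [hc3 hc4].
destruct (wallis_ineq j hj) as [W1 W2].
pose proof PI_RGT_0 as hpi.
assert (hF := Fr_pos j). assert (hF2 := Fr_pos (2*j)).
assert (e2 : INR (2*j) = 2 * INR j) by (rewrite mult_INR; reflexivity).
assert (e4 : INR (2*(2*j)) = 4 * INR j) by (rewrite !mult_INR; simpl; ring).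
unfold Ef. rewrite e2, e4. replace (2*(2*j))%nat with (2*(2*j))%nat by reflexivity.
rewrite (Gm_even j), (Gm_even (2*j)).
set (x := INR j) in *. set (c1 := c (2*j)%nat) in *. set (c2 := c (2*(2*j))%nat) in *.
set (L1 := ln (Fr j)). set (L2 := ln (Fr (2*j))).
assert (e21 : INR (2*j+1) = 2 * x + 1) by (rewrite plus_INR, mult_INR; reflexivity).
rewrite e2 in W1. rewrite e21 in W2.
assert (h16 : 0 < 16 ^ j) by (apply pow_lt; lra).
assert (A1 : ln (16^j * Fr j^4) = 4*x*ln 2 + 4*L1).
{ rewrite ln_mult by (try lra; apply pow_lt; lra). rewrite !ln_pow by lra.
  replace 16 with (2^4) by ring. rewrite ln_pow by lra. fold x L1. simpl. ring. }
assert (A2 : ln (PI/2 * (2*x) * Fr (2*j)^2) = ln PI - ln 2 + ln 2 + ln x + 2 * L2).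
{ rewrite !ln_mult by (try lra; try (apply pow_lt; lra); apply Rmult_lt_0_compat; lra).
  rewrite ln_div, ln_pow by lra. fold L2. simpl. ring. }
assert (A3 : ln (PI/2 * (2*x+1) * Fr (2*j)^2) = ln PI - ln 2 + ln (2*x+1) + 2 * L2).
{ rewrite !ln_mult by (try lra; try (apply pow_lt; lra); apply Rmult_lt_0_compat; lra).
  rewrite ln_div, ln_pow by lra. fold L2. simpl. ring. }
apply ln_le in W1; [|apply Rmult_lt_0_compat; [apply Rmult_lt_0_compat|]; try lra; apply pow_lt; lra].
apply ln_le in W2; [|apply Rmult_lt_0_compat; [|apply pow_lt]; lra].
rewrite A1, A2 in W1. rewrite A1, A3 in W2.
rewrite !ln_mult by lra.
assert (l4 : ln 4 = 2 * ln 2) by (replace 4 with (2*2) by ring; rewrite ln_mult; lra).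
assert (l2x : ln (2 * x) = ln 2 + ln x) by (apply ln_mult; lra).
assert (l4x : ln (4 * x) = 2 * ln 2 + ln x) by (rewrite ln_mult; lra).
rewrite l4.
split; nra.
Qed.

Lemma ln_diff_le p q : 0 < p -> 0 < q -> ln p - ln q <= (p - q) / q.
Proof.
intros hp hq. rewrite <- ln_div by lra.
pose proof (ln_le_sub1 (p/q) ltac:(apply Rdiv_lt_0_compat; lra)).
replace ((p - q)/q) with (p/q - 1) by (field; lra). lra.
Qed.

Lemma frac_le n1 n2 d1 d2 : n1 <= n2 -> 0 <= n2 -> 0 < d2 -> d2 <= d1 -> n1 / d1 <= n2 / d2.
Proof.
intros h1 h2 h3 h4. apply Rle_trans with (n2 / d1).
- unfold Rdiv. apply Rmult_le_compat_r; [apply Rlt_le, Rinv_0_lt_compat; lra|lra].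
- unfold Rdiv. apply Rmult_le_compat_l; [lra|]. apply Rinv_le_contravar; lra.
Qed.

Lemma ctheta n : (1 <= n)%nat -> 0 < theta n < 1.
Proof. intros hn. rewrite theta_eq. apply thR_bnd. apply (le_INR 1); lia. Qed.
Lemma cnu n : (1 <= n)%nat -> 0 < nu n < 1.
Proof. intros hn. rewrite nu_eq. apply nuR_bnd. apply (le_INR 1); lia. Qed.

Lemma odd_bounds (c : nat -> R) k : (1 <= k)%nat -> (forall n, (1 <= n)%nat -> 0 < c n < 1) ->
  Ef (c (2*k)%nat) (2*k) - 1 / (2 * INR k) <= Ef (c (2*k+1)%nat) (2*k+1) /\
  Ef (c (2*k+1)%nat) (2*k+1) <= Ef (c (2*k)%nat) (2*k) + 3 / (4 * INR k).
Proof.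
intros hk hc.
assert (hx : 1 <= INR k) by (apply (le_INR 1); lia).
destruct (hc (2*k)%nat ltac:(lia)) as [hc1 hc2].
destruct (hc (2*k+1)%nat ltac:(lia)) as [hc3 hc4].
pose proof (Gm_odd_up k) as GU. pose proof (Gm_odd_lo k) as GL.
pose proof (Gm_pos (2*k+1)) as hG. pose proof (Fr_pos k) as hF.
pose proof PI_RGT_0 as hpi.
assert (e2 : INR (2*k) = 2 * INR k) by (rewrite mult_INR; reflexivity).
assert (e21 : INR (2*k+1) = 2 * INR k + 1) by (rewrite plus_INR, mult_INR; reflexivity).
replace (k+1)%nat with (S k) in GL by lia. rewrite Fr_S, S_INR in GL.
unfold Ef. rewrite e2, e21, (Gm_even k).
set (x := INR k) in *. set (co := c (2*k+1)%nat) in *. set (ce := c (2*k)%nat) in *.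
set (G := Gm (2*k+1)) in *. set (F := Fr k) in *.
assert (hs1 : 0 < sqrt (x+1)) by (apply sqrt_lt_R0; lra).
assert (hs2 : 0 < sqrt (x+1+/2)) by (apply sqrt_lt_R0; lra).
apply ln_le in GU; [|exact hG]. apply ln_le in GL; [|apply Rmult_lt_0_compat; lra].
rewrite ln_mult, ln_sqrt in GU by lra. rewrite !ln_mult, ln_sqrt in GL by lra.
rewrite !ln_mult by lra.
assert (l2x : ln (2 * x) = ln 2 + ln x) by (apply ln_mult; lra).
idtac.
set (l := ln (2*x+1) - ln (2*x)).
assert (lu : l <= 1 / (2*x)).
{ unfold l. pose proof (ln_diff_le (2*x+1) (2*x) ltac:(lra) ltac:(lra)).
  replace ((2*x+1 - 2*x)/(2*x)) with (1/(2*x)) in H by (field; lra). lra. }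
assert (ll : 1 / (2*x+1) <= l).
{ unfold l. rewrite <- ln_div by lra. pose proof (ln_ge_1sub ((2*x+1)/(2*x)) ltac:(apply Rdiv_lt_0_compat; lra)).
  replace (1 - / ((2*x+1)/(2*x))) with (1/(2*x+1)) in H by (field; lra). lra. }
assert (lu2 : (2*x+1)/2 * l <= 1/2 + 1/(4*x)).
{ replace (1/2 + 1/(4*x)) with ((2*x+1)/2 * (1/(2*x))) by (field; lra).
  apply Rmult_le_compat_l; lra. }
assert (ll2 : 1/2 <= (2*x+1)/2 * l).
{ replace (1/2) with ((2*x+1)/2 * (1/(2*x+1))) at 1 by (field; lra).
  apply Rmult_le_compat_l; lra. }
assert (ec : ln (2*x+1+co) - ln (2*x+ce) <= 1/x).
{ pose proof (ln_diff_le (2*x+1+co) (2*x+ce) ltac:(lra) ltac:(lra)).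
  assert ((2*x+1+co - (2*x+ce)) / (2*x+ce) <= 2 / (2*x)) by (apply frac_le; lra).
  replace (2/(2*x)) with (1/x) in H0 by (field; lra). lra. }
assert (ec2 : 0 <= ln (2*x+1+co) - ln (2*x+ce)).
{ assert (ln (2*x+ce) <= ln (2*x+1+co)) by (apply ln_le; lra). lra. }
assert (eq3 : ln x + ln (x+1+/2) <= 2 * ln (x+1)).
{ rewrite <- ln_mult by lra. replace (2 * ln (x+1)) with (ln ((x+1)*(x+1))) by (rewrite ln_mult; lra).
  apply ln_le. nra. nra. }
assert (eq4 : - (1 / x) <= ln x - ln (x+1)).
{ rewrite <- ln_div by lra. pose proof (ln_ge_1sub (x/(x+1)) ltac:(apply Rdiv_lt_0_compat; lra)).
  replace (1 - / (x/(x+1))) with (- (1/x)) in H by (field; lra). lra. }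
unfold l in lu2, ll2. rewrite l2x in lu2, ll2.
assert (r1 : 1/(2*x) = (1/x)/2) by (field; lra).
assert (r2 : 1/(4*x) = (1/x)/4) by (field; lra).
assert (r3 : 3/(4*x) = 3*(1/x)/4) by (field; lra).
rewrite r2 in lu2. rewrite r1, r3.
split; lra.
Qed.

Lemma big_nat (C : R) (j0 : nat) : exists J, (j0 <= J)%nat /\ C < INR J.
Proof.
destruct (INR_unbounded C) as [N hN]. exists (N + j0)%nat. split; [lia|].
rewrite plus_INR. pose proof (pos_INR j0). lra.
Qed.

Lemma N_even_neg j : (1 <= j)%nat -> Nq (2*j) < 0.
Proof.
intros hj. destruct (Rlt_or_le (Nq (2*j)) 0) as [h|h]; [exact h|]. exfalso.
pose proof (N_step (2*j) ltac:(lia)) as hs.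
set (eta := Nq (2*j+2)) in *.
assert (heta : 0 < eta) by lra.
destruct (big_nat (3 / eta) (j+1)) as [J [hJ1 hJ2]].
assert (hX : 1 <= INR J) by (apply (le_INR 1); lia).
assert (hN : eta <= Nq (2*J)).
{ replace (2*J)%nat with ((2*j+2) + 2*(J-j-1))%nat by lia. apply N_mono. lia. }
destruct (wallis_E nu J ltac:(lia) cnu) as [W1 _].
fold (Nq (2*J)) in W1. fold (Nq (2*(2*J))) in W1.
pose proof (gap (2*(2*J)) ltac:(lia)) as g1.
pose proof (gap (2*J) ltac:(lia)) as g2.
pose proof (T_mono (2*J) J ltac:(lia)) as tm. replace (2*J + 2*J)%nat with (2*(2*J))%nat in tm by lia.
assert (e2 : INR (2*J) = 2 * INR J) by (rewrite mult_INR; reflexivity).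
rewrite e2 in g2.
set (X := INR J) in *.
destruct (cnu (2*J) ltac:(lia)) as [c1a c1b]. destruct (cnu (2*(2*J)) ltac:(lia)) as [c2a c2b].
set (c1 := nu (2*J)) in *. set (c2 := nu (2*(2*J))) in *.
assert (hr : 2 * ln (2 * X + c1) - ln X - ln (4 * X + c2) <= 5 / (4 * X)).
{ assert (e : 2 * ln (2*X+c1) - ln X - ln (4*X+c2) = ln ((2*X+c1)^2) - ln (X*(4*X+c2)))
    by (rewrite ln_pow, ln_mult by lra; simpl; ring).
  rewrite e.
  eapply Rle_trans. apply ln_diff_le. nra. nra.
  replace (5 / (4*X)) with ((5 * X) / (4 * X^2)) by (field; lra).
  apply frac_le; nra. }
assert (0 < 1 / X) by (apply Rdiv_lt_0_compat; lra).
assert (r1 : 1 / (2*X) = (1/X)/2) by (field; lra).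
assert (r2 : 5 / (4*X) = 5*(1/X)/4) by (field; lra).
assert (r3 : 3 / eta < X) by exact hJ2.
assert (eta * X > 3).
{ apply (Rmult_lt_reg_r (/eta)). apply Rinv_0_lt_compat; lra.
  replace (3 * / eta) with (3 / eta) by reflexivity. replace (eta * X * / eta) with X by (field; lra). lra. }
assert (eta * (1/X) * X = eta) by (field; lra).
assert (Nq (2*J) <= 9/8 * (1/X)) by lra.
nra.
Qed.

Lemma T_even_pos j : (2 <= j)%nat -> 0 < Tq (2*j).
Proof.
intros hj. destruct (Rlt_or_le 0 (Tq (2*j))) as [h|h]; [exact h|]. exfalso.
pose proof (T_step (2*j) ltac:(lia)) as hs.
set (eta := - Tq (2*j+2)) in *.
assert (heta : 0 < eta) by (unfold eta; lra).
destruct (big_nat (2 / eta) (j+1)) as [J [hJ1 hJ2]].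
assert (hX : 1 <= INR J) by (apply (le_INR 1); lia).
assert (hT : Tq (2*J) <= - eta).
{ unfold eta. replace (2*J)%nat with ((2*j+2) + 2*(J-j-1))%nat by lia. rewrite Ropp_involutive. apply T_mono. lia. }
destruct (wallis_E theta J ltac:(lia) ctheta) as [_ W2].
fold (Tq (2*J)) in W2. fold (Tq (2*(2*J))) in W2.
pose proof (gap (2*(2*J)) ltac:(lia)) as g1.
pose proof (gap (2*J) ltac:(lia)) as g2.
pose proof (N_mono (2*J) J ltac:(lia)) as nm. replace (2*J + 2*J)%nat with (2*(2*J))%nat in nm by lia.
assert (e2 : INR (2*J) = 2 * INR J) by (rewrite mult_INR; reflexivity).
rewrite e2 in g2.
set (X := INR J) in *.
destruct (ctheta (2*J) ltac:(lia)) as [c1a c1b]. destruct (ctheta (2*(2*J)) ltac:(lia)) as [c2a c2b].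
set (c1 := theta (2*J)) in *. set (c2 := theta (2*(2*J))) in *.
assert (hr : ln (2 * X + 1) + ln (4 * X + c2) - ln 2 - 2 * ln (2 * X + c1) <= 7 / (8 * X)).
{ assert (e : ln (2 * X + 1) + ln (4 * X + c2) - ln 2 - 2 * ln (2 * X + c1)
     = ln ((2*X+1)*(4*X+c2)) - ln (2*(2*X+c1)^2))
    by (rewrite !ln_mult, ln_pow by (try apply pow_lt; lra); simpl; ring).
  rewrite e.
  eapply Rle_trans. apply ln_diff_le. nra. nra.
  replace (7 / (8*X)) with ((7 * X) / (8 * X^2)) by (field; lra).
  apply frac_le; nra. }
assert (0 < 1 / X) by (apply Rdiv_lt_0_compat; lra).
assert (r1 : 1 / (2*X) = (1/X)/2) by (field; lra).
assert (r2 : 7 / (8*X) = 7*(1/X)/8) by (field; lra).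
assert (eta * X > 2).
{ apply (Rmult_lt_reg_r (/eta)). apply Rinv_0_lt_compat; lra.
  replace (2 * / eta) with (2 / eta) by reflexivity. replace (eta * X * / eta) with X by (field; lra). lra. }
assert (eta * (1/X) * X = eta) by (field; lra).
assert (- Tq (2*J) <= 15/16 * (1/X)) by lra.
nra.
Qed.

Lemma N_odd_neg k : Nq (2*k+1) < 0.
Proof.
destruct (Rlt_or_le (Nq (2*k+1)) 0) as [h|h]; [exact h|]. exfalso.
pose proof (N_step (2*k+1) ltac:(lia)) as hs.
set (eta := Nq (2*k+1+2)) in *.
assert (heta : 0 < eta) by lra.
destruct (big_nat (1 / eta) (k+1)) as [K [hK1 hK2]].
assert (hX : 1 <= INR K) by (apply (le_INR 1); lia).
assert (hN : eta <= Nq (2*K+1)).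
{ unfold eta. replace (2*K+1)%nat with ((2*k+1+2) + 2*(K-k-1))%nat by lia. apply N_mono. lia. }
destruct (odd_bounds nu K ltac:(lia) cnu) as [_ O2].
fold (Nq (2*K)) in O2. fold (Nq (2*K+1)) in O2.
pose proof (N_even_neg K ltac:(lia)).
set (X := INR K) in *.
assert (0 < 1 / X) by (apply Rdiv_lt_0_compat; lra).
assert (r : 3 / (4*X) = 3*(1/X)/4) by (field; lra).
assert (eta * X > 1).
{ apply (Rmult_lt_reg_r (/eta)). apply Rinv_0_lt_compat; lra.
  replace (1 * / eta) with (1 / eta) by reflexivity. replace (eta * X * / eta) with X by (field; lra). lra. }
assert (eta * (1/X) * X = eta) by (field; lra).
nra.
Qed.

Lemma T_odd_pos k : (2 <= k)%nat -> 0 < Tq (2*k+1).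
Proof.
intros hk. destruct (Rlt_or_le 0 (Tq (2*k+1))) as [h|h]; [exact h|]. exfalso.
pose proof (T_step (2*k+1) ltac:(lia)) as hs.
set (eta := - Tq (2*k+1+2)) in *.
assert (heta : 0 < eta) by (unfold eta; lra).
destruct (big_nat (1 / eta) (k+1)) as [K [hK1 hK2]].
assert (hX : 1 <= INR K) by (apply (le_INR 1); lia).
assert (hT : Tq (2*K+1) <= - eta).
{ unfold eta. replace (2*K+1)%nat with ((2*k+1+2) + 2*(K-k-1))%nat by lia. rewrite Ropp_involutive. apply T_mono. lia. }
destruct (odd_bounds theta K ltac:(lia) ctheta) as [O1 _].
fold (Tq (2*K)) in O1. fold (Tq (2*K+1)) in O1.
pose proof (T_even_pos K ltac:(lia)).
set (X := INR K) in *.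
assert (0 < 1 / X) by (apply Rdiv_lt_0_compat; lra).
assert (r : 1 / (2*X) = (1/X)/2) by (field; lra).
assert (eta * X > 1).
{ apply (Rmult_lt_reg_r (/eta)). apply Rinv_0_lt_compat; lra.
  replace (1 * / eta) with (1 / eta) by reflexivity. replace (eta * X * / eta) with X by (field; lra). lra. }
assert (eta * (1/X) * X = eta) by (field; lra).
nra.
Qed.

Lemma T_pos n : (3 <= n)%nat -> 0 < Tq n.
Proof.
intros hn. destruct (Nat.Even_or_Odd n) as [[j ->]|[k ->]].
- apply T_even_pos. lia.
- destruct (Nat.eq_dec k 1) as [->|hk].
  + pose proof T_7_3. pose proof (T_odd_pos 3 ltac:(lia)). simpl in *. lra.
  + apply T_odd_pos. lia.
Qed.

Lemma N_neg n : (1 <= n)%nat -> Nq n < 0.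
Proof.
intros hn. destruct (Nat.Even_or_Odd n) as [[j ->]|[k ->]].
- apply N_even_neg. lia.
- apply N_odd_neg.
Qed.

Theorem theorem3 :
  (forall n : nat, (3 <= n)%nat -> vol_bound (theta n) n < Omega n) /\
  (forall n : nat, (1 <= n)%nat -> Omega n < vol_bound (nu n) n).
Proof.
split.
- intros n hn. assert (hx : 1 <= INR n) by (apply (le_INR 1); lia).
  destruct (ctheta n ltac:(lia)) as [c1 c2].
  pose proof (ell_eq (theta n) n ltac:(lia) ltac:(lra)) as E.
  pose proof (T_pos n hn) as T. unfold Tq in T.
  apply ln_lt_inv. apply vol_pos; lra. apply Omega_pos. lra.
- intros n hn. assert (hx : 1 <= INR n) by (apply (le_INR 1); lia).
  destruct (cnu n ltac:(lia)) as [c1 c2].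
  pose proof (ell_eq (nu n) n ltac:(lia) ltac:(lra)) as E.
  pose proof (N_neg n hn) as T. unfold Nq in T.
  apply ln_lt_inv. apply Omega_pos. apply vol_pos; lra. lra.
Qed.
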